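(* Let $(a_n)_{n\ge1}$ be an Euler–Gauss sequence such that $\gcd(a_n,n)=1$ for all $n\ge1$. Then $(a_n)$ is a Gauss sequence.
   Context: $\mu$ is the Möbius function. For an integer sequence $(a_n)$ and $n\ge1$, $A_n^+=\prod_{d\mid n,\ \mu(d)=1} a_{n/d}$ and $A_n^-=\prod_{d\mid n,\ \mu(d)=-1} a_{n/d}$ (empty products equal $1$). An Euler–Gauss sequence is an integer sequence with $A_n^+\equiv A_n^-\pmod n$ for all $n\ge1$. A Gauss sequence is an integer sequence with $\sum_{d\mid n}\mu(d)a_{n/d}\equiv0\pmod n$ for all $n\ge1$. *)

(* Defs.v *)
From mathcomp Require Import all_boot all_order all_algebra.
Set Implicit Arguments. Unset Strict Implicit. Unset Printing Implicit Defensive.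
Import Order.TTheory GRing.Theory Num.Theory.
Local Open Scope ring_scope.

(* Integer sequences (a_n)_{n>=1} are modelled as a : nat -> int; a 0 is ignored. *)

Definition squarefree (d : nat) : bool := all (fun p => logn p d <= 1)%N (primes d).

(* Moebius function on positive integers (value at 0 irrelevant; set to 0). *)
Definition mobius (d : nat) : int :=
  if (0 < d)%N && squarefree d then (-1) ^+ size (primes d) else 0.

Definition Aplus (a : nat -> int) (n : nat) : int :=
  \prod_(d <- divisors n | mobius d == 1) a (n %/ d)%N.

Definition Aminus (a : nat -> int) (n : nat) : int :=
  \prod_(d <- divisors n | mobius d == -1) a (n %/ d)%N.

Definition euler_gauss (a : nat -> int) : Prop :=
  forall n : nat, (0 < n)%N -> (Aplus a n == Aminus a n %[mod n%:Z])%Z.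

Definition gauss (a : nat -> int) : Prop :=
  forall n : nat, (0 < n)%N ->
    (n%:Z %| \sum_(d <- divisors n) mobius d * a (n %/ d)%N)%Z.

(* Main.v *)
Require Import Defs.
From mathcomp Require Import all_boot all_order all_algebra.
Import Order.TTheory GRing.Theory Num.Theory.
Local Open Scope ring_scope.

Lemma Zq_int0 (q : nat) (z : int) : (1 < q)%N -> ((z%:~R : 'Z_q) == 0) = (q%:Z %| z)%Z.
Proof.
move=> q1; case: z => n.
  rewrite -pmulrn -val_eqE /= val_Zp_nat //.
rewrite NegzE intrN oppr_eq0 dvdzE abszN -pmulrn -val_eqE /= val_Zp_nat //.
Qed.

Lemma Zq_unit (q : nat) (z : int) : (1 < q)%N -> coprimez z q%:Z -> (z%:~R : 'Z_q) \is a GRing.unit.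
Proof.
move=> q1; rewrite coprimezE /=; case: z => n /=.
  by rewrite -pmulrn unitZpE // coprime_sym.
by rewrite NegzE intrN unitrN -pmulrn unitZpE // coprime_sym.
Qed.

Lemma Zq_eq (q : nat) (x y : int) : (1 < q)%N ->
  ((x%:~R : 'Z_q) == y%:~R) = (x == y %[mod q%:Z])%Z.
Proof. by move=> q1; rewrite eqz_mod_dvd -Zq_int0 // rmorphB /= subr_eq0. Qed.

Lemma mob1 : mobius 1 = 1.
Proof. by []. Qed.

Lemma mob_sq p d : prime p -> (p * p %| d)%N -> mobius d = 0.
Proof.
move=> pp hd; rewrite /mobius; case: posnP => //= d0.
have pd : (p %| d)%N by apply: dvdn_trans hd; apply: dvdn_mulr.
have : (2 <= logn p d)%N by rewrite -pfactor_dvdn // expnS expn1.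
move=> h2; suff -> : squarefree d = false by [].
apply/negbTE/negP => /allP /(_ p); rewrite mem_primes pp d0 pd => /(_ isT).
by rewrite leqNgt (leq_trans _ h2).
Qed.

Lemma mobM p e : prime p -> ~~ (p %| e)%N -> (0 < e)%N -> mobius (p * e)%N = - mobius e.
Proof.
move=> pp pe e0.
have p0 : (0 < p)%N by apply: prime_gt0.
have hperm : perm_eq (primes (p * e)) (p :: primes e).
  apply: uniq_perm; first exact: primes_uniq.
    by rewrite /= primes_uniq mem_primes (negbTE pe) !andbF.
  by move=> q; rewrite primesM // primes_prime // mem_seq1 in_cons.
have hsq : squarefree (p * e) = squarefree e.
  rewrite /squarefree (perm_all _ hperm) /= lognM // logn_prime // eqxx.
  rewrite logn_coprime ?prime_coprime //=.
  apply: eq_in_all => q; rewrite mem_primes => /and3P [qp _ qe].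
  rewrite lognM // logn_prime //.
  by have -> : (q == p) = false by apply/negbTE; apply: contra pe => /eqP <-.
rewrite /mobius muln_gt0 p0 e0 hsq /=; case: (squarefree e); last by rewrite oppr0.
by rewrite (perm_size hperm) /= exprS mulN1r.
Qed.

Lemma split_div (R : Type) (idx : R) (op : Monoid.com_law idx) p k m (F : nat -> R) :
  prime p -> (0 < k)%N -> (0 < m)%N -> ~~ (p %| m)%N ->
  (forall d, (p * p %| d)%N -> F d = idx) ->
  \big[op/idx]_(d <- divisors (p ^ k * m)) F d =
  op (\big[op/idx]_(e <- divisors m) F e) (\big[op/idx]_(e <- divisors m) F (p * e)%N).
Proof.
move=> pp k0 m0 pm hF.
have p0 : (0 < p)%N by apply: prime_gt0.
have n0 : (0 < p ^ k * m)%N by rewrite muln_gt0 expn_gt0 p0.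
have minj : injective (muln p) by move=> x y /eqP; rewrite eqn_pmul2l // => /eqP.
have ek : (p ^ k = p * p ^ k.-1)%N by rewrite -expnS prednK.
rewrite (bigID (fun d => p * p %| d)%N) /= big1 ?Monoid.mul1m //.
rewrite -big_filter -(big_map (muln p) xpredT) -big_cat.
apply: perm_big; apply: uniq_perm.
- by rewrite filter_uniq // divisors_uniq.
- rewrite cat_uniq divisors_uniq (map_inj_uniq minj) divisors_uniq /= andbT.
  apply/hasPn => x /mapP [e _ ->]; rewrite -dvdn_divisors //.
  by apply: contra pm; apply: dvdn_trans; apply: dvdn_mulr.
move=> d; rewrite mem_filter mem_cat; apply/idP/idP.
  case/andP => npd; rewrite -dvdn_divisors // => dn.
  case pd: (p %| d)%N.
    apply/orP; right; apply/mapP; exists (d %/ p)%N; last by rewrite mulnC divnK.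
    have npe : ~~ (p %| (d %/ p)%N)%N.
      by apply: contra npd => h; rewrite -(divnK pd) mulnC dvdn_pmul2l.
    rewrite -dvdn_divisors //.
    rewrite -(divnK pd) mulnC ek -mulnA dvdn_pmul2l // in dn.
    rewrite -(Gauss_dvdr _ (n := p ^ k.-1)) //.
    by rewrite coprime_sym coprimeXl // prime_coprime.
  apply/orP; left; rewrite -dvdn_divisors //.
  rewrite -(Gauss_dvdr _ (n := p ^ k)) //.
  by rewrite coprime_sym coprimeXl // prime_coprime // pd.
case/orP.
  rewrite -!dvdn_divisors // => dm; rewrite dvdn_mull // andbT.
  apply: contra pm => h; apply: dvdn_trans dm; apply: dvdn_trans h; exact: dvdn_mulr.
case/mapP => e; rewrite -!dvdn_divisors // => em ->.
rewrite dvdn_pmul2l // ek -mulnA dvdn_pmul2l // dvdn_mull // andbT.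
by apply: contra pm => h; apply: dvdn_trans em.
Qed.

Lemma cancel_lemma (R : comUnitRingType) (r : seq nat) (P N : nat -> bool) (g h : nat -> R) :
 uniq r -> (1 \in r)%N -> P 1%N -> ~~ N 1%N ->
 (forall e, e \in r -> e != 1%N -> g e = h e /\ g e \is a GRing.unit) ->
 (\prod_(e <- r) (if P e then g e else 1)) * (\prod_(e <- r) (if N e then h e else 1)) =
 (\prod_(e <- r) (if N e then g e else 1)) * (\prod_(e <- r) (if P e then h e else 1)) ->
 g 1%N = h 1%N.
Proof.
move=> ur r1 P1 N1 hgh.
rewrite !(bigD1_seq 1%N r1 ur) /= P1 (negbTE N1) !mul1r.
have eqP' : \prod_(i <- r | i != 1%N) (if P i then h i else 1) =
            \prod_(i <- r | i != 1%N) (if P i then g i else 1).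
  rewrite big_seq_cond [RHS]big_seq_cond; apply: eq_bigr => i /andP [ir i1].
  by case: (hgh i ir i1) => -> _.
have eqN' : \prod_(i <- r | i != 1%N) (if N i then h i else 1) =
            \prod_(i <- r | i != 1%N) (if N i then g i else 1).
  rewrite big_seq_cond [RHS]big_seq_cond; apply: eq_bigr => i /andP [ir i1].
  by case: (hgh i ir i1) => -> _.
rewrite eqP' eqN'.
set X := \prod_(i <- r | i != 1%N) (if P i then g i else 1).
set Y := \prod_(i <- r | i != 1%N) (if N i then g i else 1).
have uX : X \is a GRing.unit.
  apply: unitr_prod_in => i ir i1; case: (P i); last exact: unitr1.
  by case: (hgh i ir i1).
have uY : Y \is a GRing.unit.
  apply: unitr_prod_in => i ir i1; case: (N i); last exact: unitr1.
  by case: (hgh i ir i1).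
have uXY : X * Y \is a GRing.unit by rewrite unitrM uX uY.
move=> H; apply: (mulIr uXY).
by rewrite mulrA H mulrC mulrA.
Qed.

Lemma KL (a : nat -> int) p : euler_gauss a ->
  (forall n : nat, (0 < n)%N -> gcdz (a n) n%:Z = 1) -> prime p ->
  forall n, (0 < n)%N -> (p %| n)%N ->
  (a n == a (n %/ p)%N %[mod (p ^ logn p n)%N%:Z])%Z.
Proof.
move=> eg cop pp n; elim/ltn_ind: n => n IH n0 pn.
have p0 : (0 < p)%N by apply: prime_gt0.
have p1 : (1 < p)%N by apply: prime_gt1.
have k0 : (0 < logn p n)%N by rewrite logn_gt0 mem_primes pp n0.
have [m cpm En] := pfactor_coprime pp n0.
move: En k0; set k := logn p n => En k0; clearbody k.
rewrite mulnC in En; subst n.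
have m0 : (0 < m)%N by move: n0; rewrite muln_gt0 => /andP [].
have pm : ~~ (p %| m)%N by rewrite -prime_coprime.
have q1 : (1 < p ^ k)%N by rewrite -(exp1n k) ltn_exp2r // -?lt0n.
rewrite -Zq_eq //.
have H : ((Aplus a (p ^ k * m)%N)%:~R : 'Z_(p ^ k)%N) = (Aminus a (p ^ k * m)%N)%:~R.
  apply/eqP; rewrite Zq_eq // eqz_mod_dvd.
  apply: dvdz_trans (_ : (p ^ k * m)%N%:Z %| _)%Z; last by rewrite -eqz_mod_dvd eg.
  by rewrite dvdzE /= dvdn_mulr.
move: H; rewrite /Aplus /Aminus !rmorph_prod !(big_mkcond (fun d => mobius d == _)) /=.
rewrite !(split_div _ _ _ p k m _ pp k0 m0 pm); last first.
- by move=> d hd; rewrite (mob_sq _ _ pp hd).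
- by move=> d hd; rewrite (mob_sq _ _ pp hd).
have hm : forall e, e \in divisors m -> mobius (p * e)%N = - mobius e.
  move=> e; rewrite -dvdn_divisors // => em; apply: mobM => //.
    by apply: contra pm => h; apply: dvdn_trans em.
  by apply: dvdn_gt0 em.
move=> H.
have := @cancel_lemma _ (divisors m) (fun e => mobius e == 1)
  (fun e => mobius e == -1)
  (fun e => ((a ((p ^ k * m) %/ e)%N)%:~R : 'Z_(p ^ k)%N))
  (fun e => ((a ((p ^ k * m) %/ (p * e))%N)%:~R : 'Z_(p ^ k)%N)).
rewrite /= divn1 muln1 => -> //.
- exact: divisors_uniq.
- by rewrite -dvdn_divisors // dvd1n.
- move=> e; rewrite -dvdn_divisors // => em e1.
  have e0 : (0 < e)%N by apply: dvdn_gt0 em.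
  have e2 : (1 < e)%N by rewrite ltn_neqAle eq_sym e1.
  have hj : ((p ^ k * m) %/ e = p ^ k * (m %/ e))%N by rewrite muln_divA.
  have me0 : (0 < m %/ e)%N by rewrite divn_gt0 // dvdn_leq.
  have cpme : coprime p (m %/ e).
    rewrite prime_coprime //; apply: contra pm => h; apply: dvdn_trans h _.
    exact: dvdn_div.
  have j0 : (0 < (p ^ k * m) %/ e)%N by rewrite hj muln_gt0 expn_gt0 p0.
  have jlt : ((p ^ k * m) %/ e < p ^ k * m)%N by apply: ltn_Pdiv.
  have pkj : (p ^ k %| (p ^ k * m) %/ e)%N by rewrite hj dvdn_mulr.
  have pj : (p %| (p ^ k * m) %/ e)%N.
    by apply: dvdn_trans pkj; rewrite -{1}(expn1 p) dvdn_exp2l.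
  have logj : logn p ((p ^ k * m) %/ e) = k.
    by rewrite hj mulnC logn_Gauss // pfactorK.
  split.
    apply/eqP; rewrite Zq_eq //.
    have := IH _ jlt j0 pj; rewrite logj.
    by rewrite [(p * e)%N]mulnC divnMA.
  apply: Zq_unit => //; apply: coprimez_dvdr pkj _.
  by rewrite /coprimez cop.
move: H.
under [X in _ * X = _ -> _]eq_big_seq => e er do rewrite hm // eqr_oppLR.
under [X in _ = _ * X -> _]eq_big_seq => e er do rewrite hm // eqr_oppLR opprK.
by [].
Qed.

Theorem theorem3 (a : nat -> int) :
  euler_gauss a ->
  (forall n : nat, (0 < n)%N -> gcdz (a n) n%:Z = 1) ->
  gauss a.
Proof.
move=> eg cop n n0; rewrite dvdzE /=; apply/dvdn_partP => // p.
rewrite mem_primes n0 /= => /andP [pp pn].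
rewrite p_part -[X in (X %| _)%N]/(`|(p ^ logn p n)%N%:Z|)%N -dvdzE.
have p0 : (0 < p)%N by apply: prime_gt0.
have k0 : (0 < logn p n)%N by rewrite logn_gt0 mem_primes pp n0.
have [m cpm En] := pfactor_coprime pp n0.
move: En k0; set k := logn p n => En k0; clearbody k.
rewrite mulnC in En; subst n.
have m0 : (0 < m)%N by move: n0; rewrite muln_gt0 => /andP [].
have pm : ~~ (p %| m)%N by rewrite -prime_coprime.
have hs : \sum_(d <- divisors (p ^ k * m)) mobius d * a ((p ^ k * m) %/ d)%N =
  \sum_(e <- divisors m) mobius e * a ((p ^ k * m) %/ e)%N +
  \sum_(e <- divisors m) mobius (p * e)%N * a ((p ^ k * m) %/ (p * e))%N.
  rewrite (split_div _ _ _ p k m _ pp k0 m0 pm) //.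
  by move=> d hd; rewrite (mob_sq _ _ pp hd) mul0r.
rewrite hs.
have hm : forall e, e \in divisors m -> mobius (p * e)%N = - mobius e.
  move=> e; rewrite -dvdn_divisors // => em; apply: mobM => //.
    by apply: contra pm => h; apply: dvdn_trans em.
  by apply: dvdn_gt0 em.
rewrite [X in _ + X](eq_big_seq (fun e => - (mobius e * a ((p ^ k * m) %/ (p * e))%N))); last first.
  by move=> e er; rewrite hm // mulNr.
rewrite /= -big_split /= big_seq; apply: rpred_sum => e; rewrite -dvdn_divisors // => em.
rewrite -mulrBr; apply: dvdz_mull; rewrite -eqz_mod_dvd.
have e0 : (0 < e)%N by apply: dvdn_gt0 em.
have hj : ((p ^ k * m) %/ e = p ^ k * (m %/ e))%N by rewrite muln_divA.
have me0 : (0 < m %/ e)%N by rewrite divn_gt0 // dvdn_leq.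
have cpme : coprime p (m %/ e).
  rewrite prime_coprime //; apply: contra pm => h; apply: dvdn_trans h _.
  exact: dvdn_div.
have j0 : (0 < (p ^ k * m) %/ e)%N by rewrite hj muln_gt0 expn_gt0 p0.
have pkj : (p ^ k %| (p ^ k * m) %/ e)%N by rewrite hj dvdn_mulr.
have pj : (p %| (p ^ k * m) %/ e)%N.
  by apply: dvdn_trans pkj; rewrite -{1}(expn1 p) dvdn_exp2l.
have logj : logn p ((p ^ k * m) %/ e) = k.
  by rewrite hj mulnC logn_Gauss // pfactorK.
have := KL _ _ eg cop pp _ j0 pj; rewrite logj.
by rewrite [(p * e)%N]mulnC divnMA.
Qed.
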